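(* Unpruned multiplication is an associative binary operation on $UT^1(\Sigma)$, and the isomorphism type of the trivial tree is an identity element for it. The set $UT(\Sigma)$ of isomorphism types of non-trivial trees is a subsemigroup of $UT^1(\Sigma)$. The maps $X\mapsto X^{(+)}$ and $X\mapsto X^{( * )}$ are idempotent unary operations on $UT^1(\Sigma)$, and the subsemigroup generated by their images is commutative.
   Context: Let $\Sigma$ be a set. A $\Sigma$-tree is a finite directed graph whose underlying undirected graph is a tree, edges labelled by elements of $\Sigma$, with distinguished start and end vertices such that there is a (possibly empty) directed path from the start vertex to the end vertex; it is trivial if it has only one vertex. Isomorphism of $\Sigma$-trees means a label-preserving graph isomorphism preserving start and end vertices. $UT^1(\Sigma)$ is the set of isomorphism types of $\Sigma$-trees. Unpruned multiplication: $X\times Y$ is obtained from disjoint representatives of $X$ and $Y$ by identifying the end vertex of $X$ with the start vertex of $Y$, with start vertex that of $X$ and end vertex that of $Y$. $X^{(+)}$ is the tree with the same graph and start vertex as $X$ but with end vertex equal to the start vertex; $X^{( * )}$ has the same graph and end vertex as $X$ but start vertex equal to the end vertex. *)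

(* Defs.v *)
From mathcomp Require Import all_boot.
Set Implicit Arguments. Unset Strict Implicit. Unset Printing Implicit Defensive.

(* A raw Sigma-graph: a finite vertex type, a (partial) labelled edge
   relation [E u v = Some a] meaning a directed edge u -> v labelled a,
   a start vertex and an end vertex.  At most one edge per ordered pair is
   allowed by this encoding; this loses nothing for trees, since two
   parallel edges would form a cycle of the underlying undirected graph. *)
Record sgraph (Sigma : Type) : Type := SGraph {
  V  : finType;
  E  : V -> V -> option Sigma;
  st : V;
  en : V }.

Section Trees.
Variable Sigma : Type.
Implicit Types X Y Z : sgraph Sigma.

Definition uadj X : rel (V X) := fun u v => isSome (E u v) || isSome (E v u).
Definition dadj X : rel (V X) := fun u v => isSome (E u v).

Definition is_tree X : Prop :=
  [/\ (forall v : V X, E v v = None),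
      (forall u v : V X, E u v = None \/ E v u = None),
      (forall u v : V X, connect (@uadj X) u v),
      (forall s : seq (V X), uniq s -> 3 <= size s -> ~~ cycle (@uadj X) s)
    & connect (@dadj X) (st X) (en X)].

Definition trivial X : Prop := #|V X| = 1.
Definition nontrivial X : Prop := 1 < #|V X|.

Definition iso X Y : Prop :=
  exists f : V X -> V Y,
    [/\ bijective f,
        (forall u v : V X, E (f u) (f v) = E u v),
        f (st X) = st Y
      & f (en X) = en Y].

Definition one_tree : sgraph Sigma :=
  @SGraph Sigma unit (fun _ _ => None) tt tt.

(* unpruned multiplication: glue en X with st Y.  Vertex type is
   V X + (V Y minus st Y); st Y is represented by en X. *)
Definition mulV X Y : finType := (V X + {v : V Y | v != st Y})%type.

Definition inj2 X Y (v : V Y) : mulV X Y :=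
  match insub v with Some w => inr w | None => inl (en X) end.

Definition mulE X Y (a b : mulV X Y) : option Sigma :=
  match a, b with
  | inl a, inl b => E a b
  | inr a, inr b => E (val a) (val b)
  | inl a, inr b => if a == en X then E (st Y) (val b) else None
  | inr a, inl b => if b == en X then E (val a) (st Y) else None
  end.

Definition tmul X Y : sgraph Sigma :=
  @SGraph Sigma (mulV X Y) (@mulE X Y) (inl (st X)) (inj2 X (en Y)).

Definition tplus X : sgraph Sigma := @SGraph Sigma (V X) (@E _ X) (st X) (st X).
Definition tstar X : sgraph Sigma := @SGraph Sigma (V X) (@E _ X) (en X) (en X).

(* the subsemigroup of UT^1 generated by the images of plus and star,
   as a predicate on representatives, closed under isomorphism *)
Inductive gen_plus_star : sgraph Sigma -> Prop :=
  | gen_plus X : is_tree X -> gen_plus_star (tplus X)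
  | gen_star X : is_tree X -> gen_plus_star (tstar X)
  | gen_mul X Y : gen_plus_star X -> gen_plus_star Y -> gen_plus_star (tmul X Y)
  | gen_iso X Y : gen_plus_star X -> iso X Y -> gen_plus_star Y.

End Trees.

(* Main.v *)
Require Import Defs.
From mathcomp Require Import all_boot.
Set Implicit Arguments. Unset Strict Implicit. Unset Printing Implicit Defensive.

Lemma connect_map (T T' : finType) (e : rel T) (e' : rel T') (f : T -> T') :
  (forall x y, e x y -> e' (f x) (f y)) ->
  forall x y, connect e x y -> connect e' (f x) (f y).
Proof.
move=> h x _ /connectP[p ep ->]; elim: p x ep => [|z p IH] x /=; first by rewrite connect0.
case/andP=> exz /IH; apply: connect_trans; exact/connect1/h.
Qed.

Lemma cross (T : Type) (R : rel T) (c : T -> nat) :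
  (forall u v, R u v -> c u = 0 -> c v != 2) ->
  (forall v, c v < 3) ->
  forall a q, path R a q -> c a = 0 -> c (last a q) = 2 -> has (fun v => c v == 1) q.
Proof.
move=> hR hc a q; elim: q a => [|b q IH] a /=; first by move=> _ ->.
case/andP=> Rab pq ca cl; have := hR _ _ Rab ca; have := hc b.
case Hb: (c b) => [|[|[|n]]] //= _ _; by rewrite (IH b) ?orbT.
Qed.

Lemma no_cross (T : eqType) (R : rel T) (c : T -> nat) (g : T) :
  (forall u v, R u v -> c u = 0 -> c v != 2) ->
  (forall u v, R u v -> c u = 2 -> c v != 0) ->
  (forall v, c v < 3) -> (forall v, c v = 1 -> v = g) ->
  forall s, uniq s -> cycle R s -> has (fun v => c v == 0) s ->
  has (fun v => c v == 2) s -> False.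
Proof.
move=> h02 h20 hc hg s us cs /hasP[x xs /eqP cx] /hasP[y ys /eqP cy].
case: (rot_to xs) => i s' Hr.
have us' : uniq (x :: s') by rewrite -Hr rot_uniq.
have cs' : cycle R (x :: s') by rewrite -Hr rot_cycle.
have : y \in x :: s' by rewrite -Hr mem_rot.
rewrite inE; case/orP=> [/eqP yx|ys']; first by move: cx; rewrite -yx cy.
case/splitPr: ys' us' cs' => p1 p2 us' /=.
rewrite rcons_cat /= cat_path /= => /andP[pp1 /andP[Ry pp2]].
have h1 : has (fun v => c v == 1) (rcons p1 y).
  by apply: (cross h02 hc (a:=x)); rewrite ?rcons_path ?pp1 ?last_rcons.
have h2 : has (fun v => c v == 1) (rcons p2 x).
  have <- : has (fun v => 2 - c v == 1) (rcons p2 x) = has (fun v => c v == 1) (rcons p2 x).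
    by apply: eq_has => v; have := hc v; case: (c v) => [|[|[|n]]].
  apply: (cross (R := R) (c := fun v => 2 - c v) _ _ (a:=y)).
  - move=> u v Ruv h; have hu : c u = 2 by move: h (hc u); case: (c u) => [|[|[|n]]].
    have := h20 _ _ Ruv hu; move: (hc v); case: (c v) => [|[|[|n]]] //.
  - by move=> w; case: (c w) => [|[|[|n]]].
  - exact: pp2.
  - by rewrite cy.
  - by rewrite last_rcons cx.
move: h1 h2; rewrite -cats1 -(cats1 p2) !has_cat /= cy cx /= !orbF.
case/hasP=> g1 g1p /eqP /hg eg1; case/hasP=> g2 g2p /eqP /hg eg2.
move: us'; rewrite cons_uniq cat_uniq => /andP[_ /and3P[_ /hasPn H _]].
have := H g2; rewrite inE g2p orbT /= => /(_ isT); by rewrite eg2 -eg1 g1p.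
Qed.
Section Main.
Variable Sigma : Type.
Implicit Types X Y Z : sgraph Sigma.

Definition loopless X := forall v : V X, E v v = None.

Lemma inj2_st X Y : inj2 X (st Y) = inl (en X).
Proof. by rewrite /inj2 insubF ?eqxx. Qed.

Lemma inj2_val X Y (w : {v : V Y | v != st Y}) : inj2 X (val w) = inr w.
Proof. by rewrite /inj2 valK. Qed.

Variant mulV_spec (X Y : sgraph Sigma) : mulV X Y -> Type :=
 | MulL (a : V X) : @mulV_spec X Y (inl a)
 | MulR (b : V Y) : b != st Y -> @mulV_spec X Y (inj2 X b).

Lemma mulVP X Y u : @mulV_spec X Y u.
Proof. case: u => [a|w]; first exact: MulL. by have := @MulR X Y (val w) (valP w); rewrite inj2_val. Qed.

Lemma inj2_inr X Y b : b != st Y -> exists w, inj2 X b = inr w.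
Proof. by move=> Hb; exists (Sub b Hb); rewrite -inj2_val. Qed.

Lemma mulE_l2 X Y a b : @E _ (tmul X Y) (inl a) (inj2 X b) =
  if b == st Y then E a (en X) else if a == en X then E (st Y) b else None.
Proof.
rewrite /inj2; case: insubP => [w Hw Ew|] /=; first by rewrite Ew (negbTE Hw).
by move/negbNE/eqP=> ->; rewrite eqxx.
Qed.

Lemma mulE_2l X Y a b : @E _ (tmul X Y) (inj2 X b) (inl a) =
  if b == st Y then E (en X) a else if a == en X then E b (st Y) else None.
Proof.
rewrite /inj2; case: insubP => [w Hw Ew|] /=; first by rewrite Ew (negbTE Hw).
by move/negbNE/eqP=> ->; rewrite eqxx.
Qed.

Lemma mulE_22 X Y a b : loopless X -> loopless Y ->
  @E _ (tmul X Y) (inj2 X a) (inj2 X b) = E a b.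
Proof.
move=> lX lY; rewrite /inj2.
case: insubP => [w Hw <-|/negbNE/eqP->]; case: insubP => [w' Hw' <-|/negbNE/eqP->] //=;
  by rewrite ?eqxx ?lX ?lY.
Qed.

Lemma inj2_inj X Y : injective (@inj2 _ X Y).
Proof.
move=> a b; rewrite /inj2.
case: insubP => [w Hw <-|/negbNE/eqP->]; case: insubP => [w' Hw' <-|/negbNE/eqP->] //=.
by case=> ->.
Qed.

Lemma loopless_tree X : is_tree X -> loopless X.
Proof. by case. Qed.

Lemma loopless_mul X Y : loopless X -> loopless Y -> loopless (tmul X Y).
Proof. by move=> lX lY [a|w] /=. Qed.

Lemma card_mulV X Y : #|{: mulV X Y}| = #|V X| + (#|V Y|).-1.
Proof. by rewrite card_sum card_sig -(cardC1 (st Y)). Qed.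

Definition cls X Y (u : mulV X Y) : nat :=
  match u with inl a => if a == en X then 1 else 0 | inr _ => 2 end.

Definition getl X Y (u : mulV X Y) : option (V X) :=
  if u is inl a then Some a else None.

Definition projY X Y (u : mulV X Y) : V Y :=
  if u is inr w then val w else st Y.

Lemma tree_mul X Y : is_tree X -> is_tree Y -> is_tree (tmul X Y).
Proof.
move=> tX tY; have lX := loopless_tree tX; have lY := loopless_tree tY.
case: tX => _ apX cX acX dX; case: tY => _ apY cY acY dY.
have hY : forall y y', uadj y y' -> uadj (inj2 X y : V (tmul X Y)) (inj2 X y').
  by move=> y y'; rewrite /uadj !mulE_22.
split.
- exact: loopless_mul.
- move=> u v; case: (mulVP u) => [a|b Hb]; case: (mulVP v) => [a'|b' Hb'].
  + exact: apX.
  + rewrite mulE_l2 mulE_2l (negbTE Hb'); case: eqP => _; [exact: apY|by left].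
  + rewrite mulE_l2 mulE_2l (negbTE Hb); case: eqP => _; [exact: apY|by left].
  + by rewrite !mulE_22 //; exact: apY.
- have hg : forall u : V (tmul X Y), connect (@uadj _ (tmul X Y)) u (inl (en X)).
    case=> [a|w].
    + by apply: (connect_map (e := @uadj _ X) (f := inl)) => //.
    + rewrite -inj2_val -(inj2_st X Y).
      by apply: (connect_map (e := @uadj _ Y) (f := @inj2 _ X Y)).
  move=> u v; apply: connect_trans (hg u) _.
  rewrite (eq_connect (e' := [rel x y | uadj y x])); last first.
    by move=> x y; rewrite /uadj /= orbC.
  by rewrite connect_rev /=.
- move=> s us ss; apply/negP => cs.
  have h02 : forall u v, @uadj _ (tmul X Y) u v -> cls u = 0 -> cls v != 2.
    move=> u v; case: u => [a|w]; case: v => [b|w'] /=; rewrite /uadj /=;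
    by do ?case: eqP.
  have h20 : forall u v, @uadj _ (tmul X Y) u v -> cls u = 2 -> cls v != 0.
    move=> u v; case: u => [a|w]; case: v => [b|w'] /=; rewrite /uadj /=;
    by do ?case: eqP.
  have hc : forall u : V (tmul X Y), cls u < 3 by case=> [a|w] //=; case: eqP.
  have hg : forall u : V (tmul X Y), cls u = 1 -> u = inl (en X).
    by case=> [a|w] //=; case: eqP => [->|].
  case H2: (has (fun v => cls v == 2) s); last first.
  + have Es : s = map inl (pmap (@getl X Y) s).
      elim: s {us ss cs} H2 => [|[a|w] s IH] //=.
      by case: (a == en X) => /negbT/norP[_ /negbTE /IH <-].
    move: us ss cs; rewrite Es map_inj_uniq; last by move=> ? ? [].
    by rewrite size_map cycle_map => us ss cs; move: (acX _ us ss); rewrite cs.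
  case H0: (has (fun v => cls v == 0) s).
  + by case: (no_cross h02 h20 hc hg us cs); rewrite ?H0 ?H2.
  + have Es : s = map (@inj2 _ X Y) (map (@projY X Y) s).
      elim: s {us ss cs H2} H0 => [|[a|w] s IH] //=.
      * by case: (a =P en X) => [->|] //= /IH <-; rewrite inj2_st.
      * by move=> /IH <-; rewrite inj2_val.
    move: us ss cs; rewrite Es (map_inj_uniq (@inj2_inj X Y)) size_map cycle_map.
    have H : relpre (@inj2 _ X Y) (@uadj _ (tmul X Y)) =2 @uadj _ Y.
      by move=> y y'; rewrite /= /uadj !mulE_22.
    by move=> us ss cs; move: (acY _ us ss); rewrite -(eq_cycle H) cs.
- apply: connect_trans (_ : connect _ (inl (en X)) _).
    by apply: (connect_map (e := @dadj _ X) (f := inl)) => //.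
  rewrite -(inj2_st X Y).
  by apply: (connect_map (e := @dadj _ Y) (f := @inj2 _ X Y)) => // y y'; rewrite /dadj mulE_22.
Qed.

Lemma iso_intro X Y (h : V X -> V Y) : injective h -> #|V Y| <= #|V X| ->
  (forall u v, E (h u) (h v) = E u v) -> h (st X) = st Y -> h (en X) = en Y -> iso X Y.
Proof. by move=> hi hc he hs hn; exists h; split => //; apply: inj_card_bij. Qed.

Lemma iso_card X Y : iso X Y -> #|V X| = #|V Y|.
Proof. by case=> f [bf _ _ _]; apply: bij_eq_card bf. Qed.

Lemma iso_loopless X Y : iso X Y -> loopless X -> loopless Y.
Proof.
case=> f [[g gK fK] hE _ _] lX v; by rewrite -(fK v) hE lX.
Qed.

Lemma mulE_ll X Y a b : @E _ (tmul X Y) (inl a) (inl b) = E a b.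
Proof. by []. Qed.

Lemma eq_inj2 X Y a b : (@inj2 _ X Y a == inj2 X b) = (a == b).
Proof. by apply/eqP/eqP => [/inj2_inj|->]. Qed.

Lemma inj2_eq_inl X Y b a : b != st Y -> (@inj2 _ X Y b == inl a) = false.
Proof. by case/(inj2_inr X) => w ->. Qed.

Lemma eq_inl (A B : eqType) (a b : A) : (inl a == inl b :> A + B) = (a == b).
Proof. by []. Qed.

Lemma card_pos X : 0 < #|V X|.
Proof. by apply/card_gt0P; exists (st X). Qed.

Lemma iso_mul X X' Y Y' : loopless X -> loopless Y ->
  iso X X' -> iso Y Y' -> iso (tmul X Y) (tmul X' Y').
Proof.
move=> lX lY isX isY.
have lX' := iso_loopless isX lX; have lY' := iso_loopless isY lY.
have cX := iso_card isX; have cY := iso_card isY.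
case: isX => f [bf fE fs fn]; case: isY => g [bg gE gs gn].
have fi := bij_inj bf; have gi := bij_inj bg.
pose h (u : V (tmul X Y)) : V (tmul X' Y') :=
  match u with inl a => inl (f a) | inr w => inj2 X' (g (val w)) end.
have h2 : forall b, h (inj2 X b) = inj2 X' (g b).
  move=> b; rewrite {1}/inj2; case: insubP => [w _ <- //|/negbNE/eqP->].
  by rewrite /= fn gs inj2_st.
have hl : forall a, h (inl a) = inl (f a) by [].
apply: (@iso_intro _ _ h).
- move=> u v; case: (mulVP u) => [a|b Hb]; case: (mulVP v) => [a'|b' Hb'];
    rewrite ?h2 ?hl.
  + by case=> /fi ->.
  + move=> /esym/eqP; rewrite inj2_eq_inl // -gs inj_eq //.
  + move=> /eqP; rewrite inj2_eq_inl // -gs inj_eq //.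
  + by move/inj2_inj/gi ->.
- by rewrite !card_mulV cX cY.
- move=> u v; case: (mulVP u) => [a|b Hb]; case: (mulVP v) => [a'|b' Hb'];
    rewrite ?h2 ?hl ?mulE_ll ?mulE_l2 ?mulE_2l ?mulE_22 // -?gs -?fn ?inj_eq // ?fE ?gE //.
- exact: (congr1 inl fs).
- by have := h2 (en Y); rewrite gn.
Qed.

Definition amap X Y Z (u : V (tmul (tmul X Y) Z)) : V (tmul X (tmul Y Z)) :=
  match u with
  | inl (inl a) => inl a
  | inl (inr w) => inj2 X (inl (val w) : V (tmul Y Z))
  | inr z => inj2 X (inj2 Y (val z) : V (tmul Y Z))
  end.

Variant m3_spec X Y Z : V (tmul (tmul X Y) Z) -> Type :=
 | M3A (a : V X) : @m3_spec X Y Z (inl (inl a))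
 | M3B (b : V Y) : b != st Y -> @m3_spec X Y Z (inl (inj2 X b))
 | M3C (c : V Z) : c != st Z -> @m3_spec X Y Z (inj2 (tmul X Y) c).

Lemma m3P X Y Z u : @m3_spec X Y Z u.
Proof.
case: (mulVP u) => [a|c Hc]; last exact: M3C.
case: (mulVP a) => [a'|b Hb]; [exact: M3A | exact: M3B].
Qed.

Lemma iso_assoc X Y Z : loopless X -> loopless Y -> loopless Z ->
  iso (tmul (tmul X Y) Z) (tmul X (tmul Y Z)).
Proof.
move=> lX lY lZ.
have lXY := loopless_mul lX lY; have lYZ := loopless_mul lY lZ.
have a1 : forall a, amap (inl (inl a) : V (tmul (tmul X Y) Z)) = inl a by [].
have a2 : forall b, amap (inl (inj2 X b) : V (tmul (tmul X Y) Z)) = inj2 X (inl b : V (tmul Y Z)).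
  move=> b; rewrite {1}/inj2; case: insubP => [w _ <- //|/negbNE/eqP->].
  by rewrite a1 [RHS](inj2_st X (tmul Y Z)).
have a3 : forall c, amap (inj2 (tmul X Y) c) = inj2 X (inj2 Y c : V (tmul Y Z)).
  move=> c; rewrite {1}/inj2; case: insubP => [w _ <- //|/negbNE/eqP->].
  by rewrite a2 inj2_st.
have stYZ : forall b, b != st Y -> (inl b : V (tmul Y Z)) != st (tmul Y Z) by [].
have inj2YZ : forall c, c != st Z -> (inj2 Y c : V (tmul Y Z)) != st (tmul Y Z).
  by move=> c /(inj2_inr Y) [w ->].
apply: (@iso_intro _ _ (@amap X Y Z)).
- move=> u v.
  case: (m3P u) => [a|b Hb|c Hc]; case: (m3P v) => [a'|b' Hb'|c' Hc'];
    rewrite ?a1 ?a2 ?a3.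
  + by case=> ->.
  + by move=> /esym/eqP; rewrite inj2_eq_inl //; first [exact: stYZ | exact: inj2YZ].
  + by move=> /esym/eqP; rewrite inj2_eq_inl //; first [exact: stYZ | exact: inj2YZ].
  + by move=> /eqP; rewrite inj2_eq_inl //; first [exact: stYZ | exact: inj2YZ].
  + by move/inj2_inj; case => ->.
  + by move/inj2_inj/eqP; rewrite eq_sym inj2_eq_inl //; first [exact: stYZ | exact: inj2YZ].
  + by move=> /eqP; rewrite inj2_eq_inl //; first [exact: stYZ | exact: inj2YZ].
  + by move/inj2_inj/eqP; rewrite inj2_eq_inl //; first [exact: stYZ | exact: inj2YZ].
  + by move/inj2_inj/inj2_inj ->.
- rewrite !card_mulV /=; have := card_pos Y; case: #|V Y| => // n _.
  by rewrite addnA.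
- move=> u v.
  case: (m3P u) => [a|b Hb|c Hc]; case: (m3P v) => [a'|b' Hb'|c' Hc'];
    rewrite ?a1 ?a2 ?a3 ?mulE_ll ?mulE_l2 ?mulE_2l ?(mulE_22 _ _ lXY lZ)
      ?(mulE_22 _ _ lX lYZ) ?mulE_ll ?mulE_l2 ?mulE_2l ?(mulE_22 _ _ lX lY)
      ?(mulE_22 _ _ lY lZ) ?eq_inl ?eq_inj2 ?(negbTE Hb) ?(negbTE Hb')
      ?(negbTE Hc) ?(negbTE Hc') ?inj2_eq_inl //;
    (rewrite /=; case: (en Y =P st Y) => [e|/eqP ne];
    [rewrite e inj2_st ?eq_inl ?eqxx | have [w ->] := inj2_inr X ne; rewrite [_ == en Y]eq_sym (negbTE ne)];
    by case: (_ == en X)).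
- by [].
- by rewrite /= a3.
Qed.

Lemma one_tree_is_tree : is_tree (one_tree Sigma).
Proof.
split.
- by [].
- by left.
- by case=> [] []; rewrite connect0.
- move=> s us ss; exfalso; move: ss; rewrite -(card_uniqP us).
  by move=> ss; have := max_card (mem s); rewrite card_unit => H; move: (leq_trans ss H).
- exact: connect0.
Qed.

Lemma iso_one_l X : loopless X -> iso (tmul (one_tree Sigma) X) X.
Proof.
move=> lX.
pose h (u : V (tmul (one_tree Sigma) X)) : V X :=
  match u with inl _ => st X | inr w => val w end.
have h2 : forall b, h (inj2 (one_tree Sigma) b) = b.
  move=> b; rewrite {1}/inj2; case: insubP => [w _ <- //|/negbNE/eqP-> //].
apply: (@iso_intro _ _ h).
- move=> u v; case: (mulVP u) => [[]|b Hb]; case: (mulVP v) => [[]|b' Hb'];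
    rewrite ?h2 //= => E1.
  + by move: Hb'; rewrite -E1 eqxx.
  + by move: Hb; rewrite E1 eqxx.
  + by rewrite E1.
- by rewrite card_mulV card_unit add1n prednK // card_pos.
- move=> u v; case: (mulVP u) => [[]|b Hb]; case: (mulVP v) => [[]|b' Hb'];
    rewrite ?h2 ?mulE_l2 ?mulE_2l ?(mulE_22 _ _ _ lX) ?(negbTE Hb) ?(negbTE Hb') //=.
- by [].
- exact: h2.
Qed.

Lemma iso_one_r X : iso (tmul X (one_tree Sigma)) X.
Proof.
pose h (u : V (tmul X (one_tree Sigma))) : V X :=
  match u with inl a => a | inr w => en X end.
apply: (@iso_intro _ _ h).
- by move=> [a|[[] //]] [b|[[] //]] /= ->.
- by rewrite card_mulV card_unit addn0.
- by move=> [a|[[] //]] [b|[[] //]].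
- by [].
- by rewrite /= [inj2 _ _](inj2_st X (one_tree Sigma)).
Qed.

Definition pinv X := st X = en X /\ loopless X.

Lemma gen_pinv X : gen_plus_star X -> pinv X.
Proof.
elim=> {X} [X tX|X tX|X Y _ [eX lX] _ [eY lY]|X Y _ [eX lX] isXY].
- by split; [by [] | exact: (loopless_tree tX)].
- by split; [by [] | exact: (loopless_tree tX)].
- split; last exact: loopless_mul.
  by rewrite /= -eY inj2_st eX.
- split; last exact: iso_loopless isXY lX.
  by case: isXY => f [_ _ <- <-]; rewrite eX.
Qed.

Lemma iso_comm X Y : pinv X -> pinv Y -> iso (tmul X Y) (tmul Y X).
Proof.
move=> [eX lX] [eY lY].
pose h (u : V (tmul X Y)) : V (tmul Y X) :=
  match u with inl a => inj2 Y a | inr w => inl (val w) end.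
have h2 : forall b, h (inj2 X b) = inl b.
  move=> b; rewrite {1}/inj2; case: insubP => [w _ <- //|/negbNE/eqP->].
  by rewrite /= -eX inj2_st eY.
have hl : forall a, h (inl a) = inj2 Y a by [].
apply: (@iso_intro _ _ h).
- move=> u v; case: (mulVP u) => [a|b Hb]; case: (mulVP v) => [a'|b' Hb'];
    rewrite ?h2 ?hl.
  + by move/inj2_inj ->.
  + move/eqP; case: (a =P st X) => [->|ne]; first by rewrite inj2_st eq_inl => /eqP E1; move: Hb'; rewrite -E1 -eY eqxx.
    by have [w ->] := inj2_inr Y (introN eqP ne).
  + move/esym/eqP; case: (a' =P st X) => [->|ne]; first by rewrite inj2_st eq_inl => /eqP E1; move: Hb; rewrite -E1 -eY eqxx.
    by have [w ->] := inj2_inr Y (introN eqP ne).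
  + by case=> ->.
- by rewrite !card_mulV; have := card_pos X; have := card_pos Y;
    case: #|V X| => // n; case: #|V Y| => // m _ _ /=; rewrite !addSn addnC.
- move=> u v; case: (mulVP u) => [a|b Hb]; case: (mulVP v) => [a'|b' Hb'];
    rewrite ?h2 ?hl ?mulE_l2 ?mulE_2l ?(mulE_22 _ _ lY lX) ?(mulE_22 _ _ lX lY) ?mulE_ll //
      -?eX -?eY ?(negbTE Hb) ?(negbTE Hb') //.
- exact: (etrans (inj2_st Y X) (congr1 inl (esym eY))).
- exact: (etrans (h2 (en Y)) (esym (etrans (congr1 (@inj2 _ Y X) (esym eX)) (inj2_st Y X)))).
Qed.

End Main.

Theorem proposition4p2 (Sigma : Type) :
  (forall X Y : sgraph Sigma, is_tree X -> is_tree Y -> is_tree (tmul X Y)) /\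
  (forall X X' Y Y' : sgraph Sigma, is_tree X -> is_tree Y ->
      iso X X' -> iso Y Y' -> iso (tmul X Y) (tmul X' Y')) /\
  (forall X Y Z : sgraph Sigma, is_tree X -> is_tree Y -> is_tree Z ->
      iso (tmul (tmul X Y) Z) (tmul X (tmul Y Z))) /\
  (is_tree (one_tree Sigma) /\ trivial (one_tree Sigma) /\
   forall X : sgraph Sigma, is_tree X ->
      iso (tmul (one_tree Sigma) X) X /\ iso (tmul X (one_tree Sigma)) X) /\
  (forall X Y : sgraph Sigma, iso X Y -> nontrivial X -> nontrivial Y) /\
  (forall X Y : sgraph Sigma, is_tree X -> is_tree Y ->
      nontrivial X -> nontrivial Y -> nontrivial (tmul X Y)) /\
  (forall X : sgraph Sigma, is_tree X -> is_tree (tplus X) /\ is_tree (tstar X)) /\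
  (forall X Y : sgraph Sigma, is_tree X -> iso X Y ->
      iso (tplus X) (tplus Y) /\ iso (tstar X) (tstar Y)) /\
  (forall X : sgraph Sigma, is_tree X ->
      iso (tplus (tplus X)) (tplus X) /\ iso (tstar (tstar X)) (tstar X)) /\
  (forall X Y : sgraph Sigma, gen_plus_star X -> gen_plus_star Y ->
      iso (tmul X Y) (tmul Y X)).
Proof.
have isoid : forall X : sgraph Sigma, iso X X.
  by move=> X; exists id; split => //; exists id.
split; first exact: tree_mul.
split.
  by move=> X X' Y Y' tX tY; apply: iso_mul; apply: loopless_tree.
split.
  by move=> X Y Z tX tY tZ; apply: iso_assoc; apply: loopless_tree.
split.
  split; first exact: one_tree_is_tree.
  split; first by rewrite /trivial card_unit.
  move=> X tX; split; last exact: iso_one_r.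
  by apply: iso_one_l; apply: loopless_tree.
split.
  by move=> X Y /iso_card; rewrite /nontrivial => ->.
split.
  move=> X Y _ _; rewrite /nontrivial card_mulV => hX hY.
  by apply: leq_trans hX (leq_addr _ _).
split.
  by move=> X [h1 h2 h3 h4 h5]; split; split => //=; exact: connect0.
split.
  by move=> X Y _ [f [bf fE fs fn]]; split; exists f; split.
split.
  by move=> X _; split; apply: isoid.
by move=> X Y /gen_pinv pX /gen_pinv pY; apply: iso_comm.
Qed.
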